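(* Let $(M,g)$ be a Riemannian manifold and $F_1,\dots,F_k:M\to\mathbb{R}$ smooth, and let $\mathbf{T}$ be the contravariant 2-tensor defined below. Then: (i) $\nabla F_i\otimes\nabla F_j(\alpha,\beta)=0$ for all $\alpha\in\Omega^1_{tan}(M)$, $\beta\in\Omega^1(M)$; (ii) $\mathbf{T}(\alpha,\beta)=\det\Sigma_{(F_1,\dots,F_k)}^{(F_1,\dots,F_k)}\,g^{-1}(\alpha,\beta)$ for all $\alpha\in\Omega^1_{tan}(M)$, $\beta\in\Omega^1(M)$; (iii) $\mathbf{T}(\alpha,\alpha)=\det\Sigma_{(F_1,\dots,F_k)}^{(F_1,\dots,F_k)}\,\|\alpha\|^2$ for all $\alpha\in\Omega^1_{tan}(M)$; (iv) $\mathbf{T}(dF_s,\beta)=0$ for all $s=1,\dots,k$ and all $\beta\in\Omega^1(M)$.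
   Context: $\langle\cdot,\cdot\rangle$ is the inner product of $g$, $\nabla$ the gradient, $g^{-1}$ the inverse metric viewed as a contravariant 2-tensor on 1-forms, $\|\alpha\|^2=g^{-1}(\alpha,\alpha)$. For smooth $f_1,\dots,f_r,g_1,\dots,g_s$, $\Sigma_{(g_1,\dots,g_s)}^{(f_1,\dots,f_r)}$ is the $r\times s$ matrix with entry $\langle\nabla g_b,\nabla f_a\rangle$ in row $a$, column $b$; $\widehat{\cdot}$ denotes omission. $\nabla F_i\otimes\nabla F_j(\alpha,\beta):=\alpha(\nabla F_i)\beta(\nabla F_j)$. Define $$\mathbf{T}:=\sum_{i,j=1}^k(-1)^{i+j+1}\det\Sigma_{(F_1,\dots,\widehat{F_i},\dots,F_k)}^{(F_1,\dots,\widehat{F_j},\dots,F_k)}\nabla F_i\otimes\nabla F_j+\det\Sigma_{(F_1,\dots,F_k)}^{(F_1,\dots,F_k)}g^{-1}$$ (for $k=1$ the determinant of the empty matrix is $1$). $\Omega^1_{tan}(M)=\{\alpha\in\Omega^1(M)\mid \alpha(\nabla F_s)=0,\ s=1,\dots,k\}$. *)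

(* Defs.v *)
From HB Require Import structures.
From mathcomp Require Import all_boot all_order all_algebra.
From mathcomp Require Import reals.
Set Implicit Arguments. Unset Strict Implicit. Unset Printing Implicit Defensive.
Import Order.TTheory GRing.Theory Num.Theory.
Local Open Scope ring_scope.

Section Riem.
Variables (R : realType) (M : Type) (n k : nat).
(* g x : the metric at the point x, in a frame of T_xM identified with R^n
   (tangent vectors = column vectors, 1-forms = row vectors). *)
Variable g : M -> 'M[R]_n.
(* dF i x : the differential of F_i at x, a covector (row vector). *)
Variable dF : 'I_k -> M -> 'rV[R]_n.

Definition riemannian_metric : Prop :=
  forall x, (g x)^T = g x /\
    forall v : 'cV[R]_n, v != 0 -> 0 < (v^T *m g x *m v) 0 0.

Definition inner (x : M) (u v : 'cV[R]_n) : R := (u^T *m g x *m v) 0 0.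
Definition ginv (x : M) (a b : 'rV[R]_n) : R := (a *m invmx (g x) *m b^T) 0 0.
Definition norm2 (x : M) (a : 'rV[R]_n) : R := ginv x a a.
Definition grad (i : 'I_k) (x : M) : 'cV[R]_n := invmx (g x) *m (dF i x)^T.
Definition ev (a : 'rV[R]_n) (v : 'cV[R]_n) : R := (a *m v) 0 0.

Definition Sigma (x : M) : 'M[R]_k :=
  \matrix_(a < k, b < k) inner x (grad b x) (grad a x).
(* Sigma^{(F_1..^F_j..F_k)}_{(F_1..^F_i..F_k)}: rows (superscript) omit j,
   columns (subscript) omit i *)
Definition Sigma_minor (x : M) (i j : 'I_k) : 'M[R]_k.-1 :=
  row' j (col' i (Sigma x)).

Definition gradtens (i j : 'I_k) (x : M) (a b : 'rV[R]_n) : R :=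
  ev a (grad i x) * ev b (grad j x).

(* the contravariant 2-tensor T (indices 0-based: (-1)^(i+j+1) has the same
   parity as with 1-based indices) *)
Definition Ttens (x : M) (a b : 'rV[R]_n) : R :=
  \sum_(i < k) \sum_(j < k)
     (-1) ^+ (i + j + 1) * \det (Sigma_minor x i j) * gradtens i j x a b
  + \det (Sigma x) * ginv x a b.

Definition tangential (alpha : M -> 'rV[R]_n) : Prop :=
  forall x s, ev (alpha x) (grad s x) = 0.
End Riem.

(* Main.v *)
Require Import Defs.
From HB Require Import structures.
From mathcomp Require Import all_boot all_order all_algebra.
From mathcomp Require Import reals.
Import Order.TTheory GRing.Theory Num.Theory.
Local Open Scope ring_scope.

Lemma unit_g (R : realType) (M : Type) (n : nat) (g : M -> 'M[R]_n) x :
  riemannian_metric g -> g x \in unitmx.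
Proof.
move=> /(_ x) [gs gp]; rewrite unitmxE unitfE.
apply/negP => /det0P [v v0 vg].
have : v^T != 0 by rewrite trmx_eq0.
move/gp; rewrite trmxK vg mul0mx mxE ltxx //.
Qed.

Lemma s11 (R : realType) (A : 'M[R]_1) : A^T 0 0 = A 0 0.
Proof. by rewrite mxE. Qed.

Lemma part4 (R : realType) (M : Type) (n k : nat)
    (g : M -> 'M[R]_n) (dF : 'I_k -> M -> 'rV[R]_n) :
  (0 < k)%N -> riemannian_metric g ->
  forall (s : 'I_k) (b : 'rV[R]_n) x, Ttens g dF x (dF s x) b = 0.
Proof.
move=> k0 hg s b x.
have hu := @unit_g R M n g x hg.
have [gs _] := hg x.
set G := invmx (g x).
have GT : G^T = G by rewrite /G trmx_inv gs.
pose S (a c : 'I_k) := (dF a x *m G *m (dF c x)^T) 0 0.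
have Ssym a c : S a c = S c a.
  by rewrite /S -s11 !trmx_mul !trmxK GT mulmxA.
have hSig a c : Sigma g dF x a c = S c a.
  rewrite /Sigma mxE /inner /grad -/G /S !trmx_mul GT trmxK.
  by rewrite -!mulmxA (mulmxA (g x)) mulmxV // mul1mx.
pose w (j : 'I_k) := (b *m G *m (dF j x)^T) 0 0.
have hg1 i : ev (dF s x) (grad g dF i x) = S s i by rewrite /ev /grad mulmxA.
have hg2 j : ev b (grad g dF j x) = w j by rewrite /ev /grad mulmxA.
have hgi : ginv g x (dF s x) b = w s.
  by rewrite /ginv /w -s11 !trmx_mul trmxK GT mulmxA.
rewrite /Ttens /gradtens hgi.
have adjE (j : 'I_k) : \sum_(i < k) (-1) ^+ (i + j + 1) * \det (Sigma_minor g dF x i j) * S s i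
   = - (\det (Sigma g dF x) *+ (s == j)).
  have := congr1 (fun A : 'M[R]_k => A s j) (mul_mx_adj (Sigma g dF x)).
  rewrite !mxE => <-; rewrite -sumrN; apply: eq_bigr => i _.
  rewrite !mxE /cofactor; move: (hSig s i); rewrite mxE => ->; rewrite (Ssym i s) /Sigma_minor exprD expr1 (addnC i j).
  by rewrite mulrN1 !mulNr mulrC.
rewrite exchange_big /=.
under eq_bigr => j _ do under eq_bigr => i _ do rewrite hg1 hg2 mulrA.
under eq_bigr => j _ do rewrite -mulr_suml adjE.
rewrite (bigD1 s) //= eqxx big1 ?addr0; first by rewrite mulr1n mulNr addNr.
by move=> j /negbTE; rewrite eq_sym => ->; rewrite mulr0n oppr0 mul0r.
Qed.

Theorem proposition4p3 (R : realType) (M : Type) (n k : nat)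
    (g : M -> 'M[R]_n) (dF : 'I_k -> M -> 'rV[R]_n) :
  (0 < k)%N ->
  riemannian_metric g ->
  (* (i) *)
  (forall (i j : 'I_k) (alpha beta : M -> 'rV[R]_n),
      tangential g dF alpha ->
      forall x, gradtens g dF i j x (alpha x) (beta x) = 0) /\
  (* (ii) *)
  (forall alpha beta : M -> 'rV[R]_n,
      tangential g dF alpha ->
      forall x, Ttens g dF x (alpha x) (beta x)
                = \det (Sigma g dF x) * ginv g x (alpha x) (beta x)) /\
  (* (iii) *)
  (forall alpha : M -> 'rV[R]_n,
      tangential g dF alpha ->
      forall x, Ttens g dF x (alpha x) (alpha x)
                = \det (Sigma g dF x) * norm2 g x (alpha x)) /\
  (* (iv) *)
  (forall (s : 'I_k) (beta : M -> 'rV[R]_n),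
      forall x, Ttens g dF x (dF s x) (beta x) = 0).
Proof.
move=> k0 hg.
have h1 : forall (i j : 'I_k) (alpha beta : M -> 'rV[R]_n),
      tangential g dF alpha ->
      forall x, gradtens g dF i j x (alpha x) (beta x) = 0.
  by move=> i j a b ta x; rewrite /gradtens ta mul0r.
have h2 : forall alpha beta : M -> 'rV[R]_n,
      tangential g dF alpha ->
      forall x, Ttens g dF x (alpha x) (beta x)
                = \det (Sigma g dF x) * ginv g x (alpha x) (beta x).
  move=> a b ta x; rewrite /Ttens big1 ?add0r // => i _.
  by rewrite big1 // => j _; rewrite (h1 i j a b ta) mulr0.
split; first exact: h1.
split; first exact: h2.
split; first by move=> a ta x; rewrite (h2 a a ta).
by move=> s b x; apply: part4.
Qed.
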